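(* There is a constant $b>0$ such that $|X^{(j)}_k(x)|\le b^{k+j}|x|^j$ for all $x\in\mathbb R^{n+1}$ and all $k,j\in\mathbb N_0$.
   Context: $\mathbb R_n$ is the real Clifford algebra generated by $e_1,\dots,e_n$ with $e_ie_j+e_je_i=-2\delta_{ij}$, and $|\cdot|$ is the Euclidean norm on $\mathbb R_n\cong\mathbb R^{2^n}$. A point $x=(x_0,\underline x)\in\mathbb R^{n+1}$ is identified with $x_0+\underline x$, $\underline x=\sum_jx_je_j$, and $|x|^2=x_0^2+|\underline x|^2$. The Gegenbauer polynomials are $C^\nu_j(z)=\sum_{i=0}^{[j/2]}\frac{(-1)^i(\nu)_{j-i}}{i!(j-2i)!}(2z)^{j-2i}$ with $(\nu)_j=\nu(\nu+1)\cdots(\nu+j-1)$. Set $X^{(0)}_k=1$ and for $j\in\mathbb N$ $$X^{(j)}_k(x)=\mu^j_k|x|^j\Big(C^{(n-1)/2+k}_j\big(\tfrac{x_0}{|x|}\big)+\frac{n+2k-1}{n+2k+j-1}C^{(n+1)/2+k}_{j-1}\big(\tfrac{x_0}{|x|}\big)\frac{\underline x}{|x|}\Big),$$ where $\mu^{2l}_k=(-1)^l\big(C^{(n-1)/2+k}_{2l}(0)\big)^{-1}$ and $\mu^{2l+1}_k=(-1)^l\frac{n+2k+2l}{n+2k-1}\big(C^{(n+1)/2+k}_{2l}(0)\big)^{-1}$. (For a spherical monogenic $P_k$ of degree $k$, $X^{(j)}_k(x)P_k(\underline x)$ is the monogenic extension of $\underline x^jP_k(\underline x)$.) *)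

(* Defs.v *)
From Stdlib Require Import Arith Reals Lra Lia.
Open Scope R_scope.

Fixpoint sum_lt (m : nat) (f : nat -> R) : R :=
  match m with O => 0 | S m' => sum_lt m' f + f m' end.

Fixpoint poch (nu : R) (m : nat) : R :=
  match m with O => 1 | S m' => poch nu m' * (nu + INR m') end.

Definition gegen (nu : R) (j : nat) (z : R) : R :=
  sum_f_R0 (fun i => (-1) ^ i * poch nu (j - i) / (INR (fact i) * INR (fact (j - 2 * i)))
                        * (2 * z) ^ (j - 2 * i)) (Nat.div2 j).

(* A point x = (x0, x_1..x_n) of R^{n+1}: x0 : R and xv : nat -> R (only xv 0 .. xv (n-1) used,
   xv i is the coordinate x_{i+1}, coefficient of e_{i+1}). *)
Definition normx (n : nat) (x0 : R) (xv : nat -> R) : R :=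
  sqrt (x0 ^ 2 + sum_lt n (fun i => xv i ^ 2)).

(* Euclidean norm on R_n ~ R^{2^n} of a paravector a0 + sum_i v_i e_{i+1}: all other
   coordinates (basis blades e_A with |A| >= 2) vanish, so the norm is this. *)
Definition paranorm (n : nat) (a0 : R) (v : nat -> R) : R :=
  sqrt (a0 ^ 2 + sum_lt n (fun i => v i ^ 2)).

Definition mu (n k j : nat) : R :=
  let l := Nat.div2 j in
  if Nat.even j then (-1) ^ l / gegen ((INR n - 1) / 2 + INR k) (2 * l) 0
  else (-1) ^ l * (INR n + 2 * INR k + 2 * INR l) / (INR n + 2 * INR k - 1)
       / gegen ((INR n + 1) / 2 + INR k) (2 * l) 0.

(* X^{(j)}_k(x) as a paravector: scalar part and e_{i+1}-coefficients *)
Definition Xscal (n k j : nat) (x0 : R) (xv : nat -> R) : R :=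
  match j with
  | O => 1
  | S _ => mu n k j * normx n x0 xv ^ j
             * gegen ((INR n - 1) / 2 + INR k) j (x0 / normx n x0 xv)
  end.

Definition Xvec (n k j : nat) (x0 : R) (xv : nat -> R) (i : nat) : R :=
  match j with
  | O => 0
  | S j' => mu n k j * normx n x0 xv ^ j
             * ((INR n + 2 * INR k - 1) / (INR n + 2 * INR k + INR j - 1))
             * gegen ((INR n + 1) / 2 + INR k) j' (x0 / normx n x0 xv)
             * (xv i / normx n x0 xv)
  end.

Definition normX (n k j : nat) (x0 : R) (xv : nat -> R) : R :=
  paranorm n (Xscal n k j x0 xv) (Xvec n k j x0 xv).

(* Main.v *)
Require Import Defs.
From Stdlib Require Import Reals Lra Lia Psatz Arith.
Open Scope R_scope.

Lemma poch_nonneg a m : 0 <= a -> 0 <= poch a m.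
Proof. intros Ha; induction m; simpl; [lra|]. apply Rmult_le_pos; auto. pose proof (pos_INR m); lra. Qed.

Lemma poch_mono a b m : 0 <= a -> a <= b -> poch a m <= poch b m.
Proof. intros Ha Hb; induction m; simpl; [lra|].
  pose proof (pos_INR m). apply Rmult_le_compat; auto using poch_nonneg; lra. Qed.

Lemma poch_shift a m : poch a (S m) = a * poch (a+1) m.
Proof. induction m. simpl; ring.
  change (poch a (S (S m))) with (poch a (S m) * (a + INR (S m))).
  rewrite IHm, S_INR. change (poch (a+1) (S m)) with (poch (a+1) m * (a+1+INR m)). ring. Qed.

Lemma poch_pascal a m : poch (a+1) (S m) = poch a (S m) + INR (S m) * poch (a+1) m.
Proof. rewrite (poch_shift a m), S_INR. change (poch (a+1) (S m)) with (poch (a+1) m * (a+1+INR m)). ring. Qed.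

Lemma poch_nat_bound N m : poch (INR N) m <= INR (fact m) * 2^(N+m).
Proof.
  revert m; induction N; intro m.
  - destruct m. simpl; lra.
    rewrite poch_shift. rewrite INR_0, Rmult_0_l.
    apply Rmult_le_pos; [apply pos_INR | apply pow_le; lra].
  - induction m.
    + change (poch (INR (S N)) 0) with 1. change (INR (fact 0)) with 1. rewrite Nat.add_0_r. pose proof (pow_R1_Rle 2 (S N)). lra.
    + rewrite S_INR, poch_pascal. rewrite <- S_INR.
      specialize (IHN (S m)).
      replace (S N + S m)%nat with (S (N + S m)) by lia.
      replace (S N + m)%nat with (N + S m)%nat in IHm by lia.
      change (fact (S m)) with (S m * fact m)%nat. rewrite mult_INR.
      simpl pow. change (fact (S m)) with (S m * fact m)%nat in IHN. rewrite mult_INR in IHN.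
      pose proof (pos_INR (S m)). nra.
Qed.

Lemma fact_split : forall s a b, (a+b = s)%nat -> (fact (a+b) <= 2^(a+b) * fact a * fact b)%nat.
Proof.
  induction s; intros a b H.
  - assert (a = 0%nat) by lia; assert (b = 0%nat) by lia; subst; simpl; lia.
  - destruct (le_lt_dec b a) as [Hab|Hab].
    + destruct a as [|a']; [lia|].
      specialize (IHs a' b ltac:(lia)).
      replace (S a' + b)%nat with (S (a'+b)) by lia.
      change (fact (S (a'+b))) with (S (a'+b) * fact (a'+b))%nat.
      change (fact (S a')) with (S a' * fact a')%nat.
      rewrite Nat.pow_succ_r'.
      set (F := fact (a'+b)) in *. set (P := (2^(a'+b))%nat) in *.
      set (x := fact a') in *. set (y := fact b) in *.
      assert (S (a'+b) <= 2 * S a')%nat by lia. nia.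
    + destruct b as [|b']; [lia|].
      specialize (IHs a b' ltac:(lia)).
      replace (a + S b')%nat with (S (a+b')) by lia.
      change (fact (S (a+b'))) with (S (a+b') * fact (a+b'))%nat.
      change (fact (S b')) with (S b' * fact b')%nat.
      rewrite Nat.pow_succ_r'.
      set (F := fact (a+b')) in *. set (P := (2^(a+b'))%nat) in *.
      set (x := fact a) in *. set (y := fact b') in *.
      assert (S (a+b') <= 2 * S b')%nat by lia. nia.
Qed.

Lemma sum_bound f m B : (forall i, (i <= m)%nat -> Rabs (f i) <= B) -> Rabs (sum_f_R0 f m) <= INR (S m) * B.
Proof.
  induction m; intro H.
  - simpl. specialize (H 0%nat (le_n _)). lra.
  - simpl sum_f_R0. eapply Rle_trans; [apply Rabs_triang|].
    rewrite (S_INR (S m)). specialize (IHm (fun i Hi => H i ltac:(lia))).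
    specialize (H (S m) (le_n _)). lra.
Qed.

Lemma fact_pos_R n : 0 < INR (fact n).
Proof. apply lt_0_INR, lt_O_fact. Qed.

Lemma term_bound a N j t i : 0 <= a -> a <= INR N -> Rabs t <= 1 -> (2*i <= j)%nat ->
  Rabs ((-1) ^ i * poch a (j - i) / (INR (fact i) * INR (fact (j - 2 * i))) * (2 * t) ^ (j - 2 * i))
  <= 2^N * 8^j.
Proof.
  intros Ha HaN Ht Hij.
  pose proof (fact_pos_R i); pose proof (fact_pos_R (j-2*i)).
  set (D := INR (fact i) * INR (fact (j - 2 * i))).
  assert (HD : 0 < D) by (unfold D; nra).
  unfold Rdiv. rewrite !Rabs_mult, pow_1_abs, Rabs_inv by lra.
  rewrite (Rabs_pos_eq (poch a _)) by (apply poch_nonneg; auto).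
  rewrite (Rabs_pos_eq D) by lra.
  rewrite <- RPow_abs, Rabs_mult, (Rabs_pos_eq 2) by lra.
  assert (H1 : (2 * Rabs t) ^ (j - 2*i) <= 2 ^ j).
  { apply Rle_trans with (2 ^ (j - 2*i)).
    apply pow_incr; split; [pose proof (Rabs_pos t); lra | lra].
    apply Rle_pow; [lra|lia]. }
  assert (H2 : poch a (j-i) <= D * 2^j * 2^(N+j)).
  { eapply Rle_trans; [apply poch_mono; eauto|].
    eapply Rle_trans; [apply poch_nat_bound|].
    pose proof (fact_split (i + (j-2*i)) i (j-2*i) eq_refl) as F.
    replace (i + (j - 2*i))%nat with (j-i)%nat in F by lia.
    apply le_INR in F. rewrite !mult_INR, pow_INR in F. simpl (INR 2) in F.
    assert (2 ^ (j-i) <= 2^j) by (apply Rle_pow; [lra|lia]).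
    assert (2 ^ (N + (j-i)) <= 2^(N+j)) by (apply Rle_pow; [lra|lia]).
    pose proof (pow_le 2 (N+(j-i)) ltac:(lra)).
    pose proof (pow_le 2 (j-i) ltac:(lra)).
    pose proof (fact_pos_R (j-i)).
    replace (1+1) with 2 in F by lra.
    assert (INR (fact (j-i)) <= 2^j * D). { apply Rle_trans with (2^(j-i) * D). unfold D; lra. apply Rmult_le_compat_r; lra. }
    replace (D * 2^j * 2^(N+j)) with ((2^j * D) * 2^(N+j)) by ring.
    apply Rmult_le_compat; lra. }
  assert (H3 : poch a (j-i) * / D <= 2^j * 2^(N+j)).
  { apply Rmult_le_reg_r with D; auto. rewrite Rmult_assoc, Rinv_l by lra. nra. }
  replace (2^N * 8^j) with (2^j * 2^(N+j) * 2^j).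
  2:{ rewrite pow_add. replace 8 with (2*2*2) by lra. rewrite !Rpow_mult_distr. ring. }
  pose proof (poch_nonneg a (j-i) Ha).
  assert (0 <= / D) by (apply Rlt_le, Rinv_0_lt_compat; auto).
  assert (0 <= (2 * Rabs t) ^ (j - 2*i)) by (apply pow_le; pose proof (Rabs_pos t); lra).
  rewrite Rmult_1_l.
  apply Rmult_le_compat; auto. apply Rmult_le_pos; auto.
Qed.

Lemma gegen_bound a N j t : 0 <= a -> a <= INR N -> Rabs t <= 1 -> Rabs (gegen a j t) <= 2^N * 16^j.
Proof.
  intros Ha HaN Ht. unfold gegen.
  eapply Rle_trans; [apply sum_bound with (B := 2^N * 8^j)|].
  { intros i Hi. apply term_bound; auto.
    pose proof (Nat.div2_odd j). generalize dependent (Nat.b2n (Nat.odd j)). intros. lia. }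
  assert (HS : INR (S (Nat.div2 j)) <= 2^j).
  { rewrite <- (pow_INR 2). apply le_INR.
    pose proof (Nat.pow_gt_lin_r 2 j ltac:(lia)).
    pose proof (Nat.div2_odd j). generalize dependent (Nat.b2n (Nat.odd j)). intros. lia. }
  replace 16 with (2*8) by lra. rewrite Rpow_mult_distr.
  pose proof (pow_le 2 N ltac:(lra)); pose proof (pow_le 8 j ltac:(lra)).
  replace (2 ^ N * (2 ^ j * 8 ^ j)) with (2^j * (2^N * 8^j)) by ring.
  apply Rmult_le_compat_r; [apply Rmult_le_pos|]; lra.
Qed.

Lemma gegen0 a l : gegen a (2*l) 0 = (-1)^l * poch a l / INR (fact l).
Proof.
  unfold gegen. rewrite Nat.div2_double. rewrite Rmult_0_r.
  destruct l as [|l'].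
  - simpl. field.
  - change (sum_f_R0 ?f (S l')) with (sum_f_R0 f l' + f (S l')).
    rewrite sum_eq_R0.
    2:{ intros i Hi. rewrite pow_i by lia. ring. }
    replace (2 * S l' - S l')%nat with (S l') by lia.
    replace (2 * S l' - 2 * S l')%nat with 0%nat by lia.
    simpl fact at 2. simpl pow at 2. simpl INR at 2. field. apply INR_fact_neq_0.
Qed.

Lemma poch_lower a l : 1/2 <= a -> INR (fact l) <= 2^l * poch a l.
Proof.
  intro Ha. induction l. simpl; lra.
  change (fact (S l)) with (S l * fact l)%nat. rewrite mult_INR.
  change (poch a (S l)) with (poch a l * (a + INR l)).
  rewrite S_INR. simpl pow. pose proof (pos_INR l).
  pose proof (fact_pos_R l).
  assert (INR l + 1 <= 2 * (a + INR l)) by lra.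
  assert (0 <= poch a l) by (apply poch_nonneg; lra).
  assert (0 <= 2^l) by (apply pow_le; lra).
  apply Rle_trans with ((2 * (a + INR l)) * INR (fact l)).
  apply Rmult_le_compat_r; lra.
  apply Rle_trans with ((2 * (a + INR l)) * (2^l * poch a l)).
  apply Rmult_le_compat_l; lra. lra.
Qed.

Lemma inv_gegen0 a l : 1/2 <= a -> Rabs ((-1)^l / gegen a (2*l) 0) <= 2^l.
Proof.
  intro Ha. rewrite gegen0.
  pose proof (poch_lower a l Ha). pose proof (fact_pos_R l).
  assert (Hp : 0 < poch a l).
  { destruct (Rle_lt_dec (poch a l) 0); auto. pose proof (pow_le 2 l). nra. }
  assert (E : (-1)^l / ((-1)^l * poch a l / INR (fact l)) = INR (fact l) / poch a l).
  { assert ((-1)^l <> 0) by (apply pow_nonzero; lra). field. repeat split; lra. }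
  rewrite E, Rabs_pos_eq.
  2:{ unfold Rdiv. apply Rmult_le_pos; [lra|]. apply Rlt_le, Rinv_0_lt_compat; auto. }
  apply Rmult_le_reg_r with (poch a l); auto. unfold Rdiv. rewrite Rmult_assoc, Rinv_l by lra. lra.
Qed.

Lemma lin_exp m : 1 + INR m <= 2^m.
Proof. pose proof (Nat.pow_gt_lin_r 2 m ltac:(lia)) as H.
  apply le_INR in H. rewrite S_INR, pow_INR in H. simpl (INR 2) in H.
  replace (1+1) with 2 in H by lra. lra. Qed.

Lemma mu_bound n k j : (2 <= n)%nat -> Rabs (mu n k j) <= INR n * 8^(k+j).
Proof.
  intro hn. unfold mu.
  assert (Hl : (Nat.div2 j <= j)%nat).
  { pose proof (Nat.div2_odd j). generalize dependent (Nat.b2n (Nat.odd j)). intros. lia. }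
  set (l := Nat.div2 j) in *.
  assert (Hn : 2 <= INR n) by (apply (le_INR 2); lia).
  pose proof (pos_INR k). pose proof (pos_INR l). pose proof (le_INR _ _ Hl).
  assert (H2l : 2^l <= 2^(k+j)) by (apply Rle_pow; [lra|lia]).
  assert (H48 : 4^(k+j) * 2^(k+j) = 8^(k+j)) by (rewrite <- Rpow_mult_distr; f_equal; lra).
  assert (H4 : 1 <= 4^(k+j)) by (apply pow_R1_Rle; lra).
  assert (H2 : 0 <= 2^(k+j)) by (apply pow_le; lra).
  destruct (Nat.even j).
  - eapply Rle_trans; [apply inv_gegen0; lra|].
    assert (2^(k+j) <= 8^(k+j)) by (rewrite <- H48; nra).
    assert (0 <= 8^(k+j)) by (apply pow_le; lra). nra.
  - set (A := INR n + 2 * INR k + 2 * INR l).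
    set (B := INR n + 2 * INR k - 1).
    assert (E : (-1) ^ l * A / B / gegen ((INR n + 1) / 2 + INR k) (2 * l) 0
              = (A / B) * ((-1) ^ l / gegen ((INR n + 1) / 2 + INR k) (2 * l) 0))
      by (unfold Rdiv; ring).
    rewrite E, Rabs_mult.
    pose proof (inv_gegen0 ((INR n + 1) / 2 + INR k) l ltac:(lra)) as G.
    assert (HAB : Rabs (A / B) <= A).
    { unfold A, B. rewrite Rabs_pos_eq.
      2:{ unfold Rdiv. apply Rmult_le_pos; [lra|]. apply Rlt_le, Rinv_0_lt_compat; lra. }
      apply Rmult_le_reg_r with (INR n + 2 * INR k - 1); [lra|].
      unfold Rdiv. rewrite Rmult_assoc, Rinv_l by lra. nra. }
    assert (HA : A <= INR n * 4^(k+j)).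
    { pose proof (lin_exp (2*(k+j))) as L. rewrite pow_mult in L.
      replace (2^2) with 4 in L by lra. rewrite mult_INR, plus_INR in L. simpl (INR 2) in L.
      unfold A. nra. }
    pose proof (Rabs_pos (A/B)). pose proof (Rabs_pos ((-1) ^ l / gegen ((INR n + 1) / 2 + INR k) (2 * l) 0)).
    rewrite <- H48.
    apply Rle_trans with (A * 2^l). apply Rmult_le_compat; lra.
    apply Rle_trans with ((INR n * 4^(k+j)) * 2^(k+j)). apply Rmult_le_compat; try lra.
    right; ring.
Qed.

Lemma sum_lt_S n f : sum_lt (S n) f = sum_lt n f + f n.
Proof. reflexivity. Qed.

Lemma sum_lt_nonneg n f : (forall i, 0 <= f i) -> 0 <= sum_lt n f.
Proof. intro H; induction n; [simpl; lra|]. rewrite sum_lt_S. specialize (H n); lra. Qed.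

Lemma sum_lt_scale n A c v : sum_lt n (fun i => (A * (v i / c))^2) = (A/c)^2 * sum_lt n (fun i => v i ^ 2).
Proof. induction n; [simpl; ring|]. rewrite !sum_lt_S, IHn. unfold Rdiv; ring. Qed.

Lemma sum_lt_zero n : sum_lt n (fun _ => 0^2) = 0.
Proof. induction n; [simpl; ring|]. rewrite sum_lt_S, IHn. ring. Qed.

Lemma normx_sq n x0 xv : normx n x0 xv ^ 2 = x0^2 + sum_lt n (fun i => xv i ^ 2).
Proof. unfold normx. rewrite <- Rsqr_pow2, Rsqr_sqrt; auto.
  pose proof (sum_lt_nonneg n (fun i => xv i ^ 2) (fun i => pow2_ge_0 _)). nra. Qed.

Lemma t_bound n x0 xv : Rabs (x0 / normx n x0 xv) <= 1.
Proof.
  pose proof (normx_sq n x0 xv) as E.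
  pose proof (sum_lt_nonneg n (fun i => xv i ^ 2) (fun i => pow2_ge_0 _)).
  assert (Hc : 0 <= normx n x0 xv) by (unfold normx; apply sqrt_pos).
  set (c := normx n x0 xv) in *.
  destruct (Req_dec c 0) as [H0|H0].
  - rewrite H0. unfold Rdiv. rewrite Rinv_0, Rmult_0_r, Rabs_R0. lra.
  - unfold Rdiv. rewrite Rabs_mult, Rabs_inv, (Rabs_pos_eq c) by lra.
    apply Rmult_le_reg_r with c; [lra|]. rewrite Rmult_assoc, Rinv_l by lra.
    assert (Rabs x0 ^2 <= c^2) by (rewrite pow2_abs; lra).
    pose proof (Rabs_pos x0). nra.
Qed.

Lemma para_le n S A c s0 v : c ^ 2 = s0^2 + sum_lt n (fun i => v i ^ 2) ->
  sqrt (S^2 + sum_lt n (fun i => (A * (v i / c))^2)) <= Rabs S + Rabs A.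
Proof.
  intro E. rewrite sum_lt_scale.
  pose proof (sum_lt_nonneg n (fun i => v i ^ 2) (fun i => pow2_ge_0 _)).
  set (s := sum_lt n (fun i => v i ^ 2)) in *.
  assert (T : (A/c)^2 * s <= A^2).
  { destruct (Req_dec c 0) as [H0|H0].
    - rewrite H0. unfold Rdiv. rewrite Rinv_0, Rmult_0_r. simpl. nra.
    - replace ((A/c)^2 * s) with (A^2 * (s / c^2)) by (field; auto).
      assert (s / c^2 <= 1).
      { assert (0 < c^2) by (simpl; rewrite Rmult_1_r; apply Rsqr_pos_lt; auto).
        apply Rmult_le_reg_r with (c^2); auto. unfold Rdiv. rewrite Rmult_assoc, Rinv_l by lra. nra. }
      assert (0 < c^2) by (simpl; rewrite Rmult_1_r; apply Rsqr_pos_lt; auto).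
      assert (0 <= s / c^2) by (unfold Rdiv; apply Rmult_le_pos; [lra|]; apply Rlt_le, Rinv_0_lt_compat; nra).
      pose proof (pow2_ge_0 A). nra. }
  rewrite <- (sqrt_pow2 (Rabs S + Rabs A)) by (pose proof (Rabs_pos S); pose proof (Rabs_pos A); lra).
  apply sqrt_le_1_alt.
  pose proof (Rabs_pos S); pose proof (Rabs_pos A).
  rewrite <- (pow2_abs S), <- (pow2_abs A) in *. nra.
Qed.

Lemma combine n k j m g : (2<=n)%nat -> Rabs m <= INR n * 8^(k+j) -> Rabs g <= 2^(n+k) * 16^j ->
  Rabs m * Rabs g <= INR n * 2^n * 128^(k+j).
Proof.
  intros hn Hm Hg.
  assert (E : INR n * 2^n * 128^(k+j) = (INR n * 8^(k+j)) * (2^n * 16^(k+j))).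
  { replace 128 with (8*16) by lra. rewrite Rpow_mult_distr. ring. }
  assert (2^(n+k) * 16^j <= 2^n * 16^(k+j)).
  { rewrite !pow_add. assert (2^k <= 16^k) by (apply pow_incr; lra).
    pose proof (pow_le 2 n ltac:(lra)). pose proof (pow_le 16 j ltac:(lra)).
    pose proof (pow_le 2 k ltac:(lra)). rewrite Rmult_assoc. apply Rmult_le_compat_l; auto. apply Rmult_le_compat_r; auto. }
  rewrite E. apply Rmult_le_compat; auto using Rabs_pos; lra.
Qed.

Theorem lemma3p3 (n : nat) (hn : (2 <= n)%nat) :
  exists b : R, 0 < b /\
    forall (x0 : R) (xv : nat -> R) (k j : nat),
      normX n k j x0 xv <= b ^ (k + j) * normx n x0 xv ^ j.
Proof.
  assert (Hn : 2 <= INR n) by (apply (le_INR 2); lia).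
  assert (H2n : 1 <= 2^n) by (apply pow_R1_Rle; lra).
  exists (2 * INR n * 2^n * 128). split; [nra|].
  intros x0 xv k j.
  assert (Hb : 1 <= 2 * INR n * 2^n * 128) by nra.
  destruct j as [|j'].
  - unfold normX, paranorm. cbn [Xscal Xvec]. rewrite sum_lt_zero.
    rewrite Nat.add_0_r, pow_O, Rmult_1_r, Rplus_0_r, pow1, sqrt_1.
    apply pow_R1_Rle; lra.
  - pose proof (normx_sq n x0 xv) as Ec.
    assert (Hc : 0 <= normx n x0 xv) by (unfold normx; apply sqrt_pos).
    pose proof (t_bound n x0 xv) as Ht.
    set (c := normx n x0 xv) in *.
    set (j := S j').
    set (m := mu n k j).
    set (g1 := gegen ((INR n - 1) / 2 + INR k) j (x0 / c)).
    set (g2 := gegen ((INR n + 1) / 2 + INR k) j' (x0 / c)).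
    set (q := (INR n + 2 * INR k - 1) / (INR n + 2 * INR k + INR j - 1)).
    unfold normX, paranorm.
    change (Xscal n k (S j') x0 xv) with (m * c^j * g1).
    change (sum_lt n (fun i => Xvec n k (S j') x0 xv i ^ 2))
      with (sum_lt n (fun i => ((m * c^j * q * g2) * (xv i / c)) ^ 2)).
    eapply Rle_trans; [exact (para_le n (m*c^j*g1) (m*c^j*q*g2) c x0 xv Ec)|].
    pose proof (pos_INR k).
    assert (HjR : 1 <= INR j) by (apply (le_INR 1); unfold j; lia).
    assert (Hq : Rabs q <= 1).
    { unfold q. rewrite Rabs_pos_eq.
      2:{ unfold Rdiv. apply Rmult_le_pos; [lra|]. apply Rlt_le, Rinv_0_lt_compat; lra. }
      apply Rmult_le_reg_r with (INR n + 2 * INR k + INR j - 1); [lra|].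
      unfold Rdiv. rewrite Rmult_assoc, Rinv_l by lra. lra. }
    pose proof (mu_bound n k j hn) as Hm. fold m in Hm.
    assert (Hg1 : Rabs g1 <= 2^(n+k) * 16^j).
    { apply gegen_bound; auto. lra. rewrite plus_INR. lra. }
    assert (Hg2 : Rabs g2 <= 2^(n+k) * 16^j).
    { eapply Rle_trans. apply (gegen_bound _ (n+k)); auto. lra. rewrite plus_INR. lra.
      apply Rmult_le_compat_l. apply pow_le; lra. apply Rle_pow; [lra|unfold j; lia]. }
    pose proof (combine n k j m g1 hn Hm Hg1) as C1.
    pose proof (combine n k j m g2 hn Hm Hg2) as C2.
    assert (Hcj : 0 <= c^j) by (apply pow_le; auto).
    rewrite !Rabs_mult, (Rabs_pos_eq (c^j)) by auto.
    set (K := INR n * 2 ^ n * 128 ^ (k + j)) in *.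
    assert (S1 : Rabs m * c^j * Rabs g1 <= K * c^j) by nra.
    assert (S2 : Rabs m * c^j * Rabs q * Rabs g2 <= K * c^j).
    { pose proof (Rabs_pos q). pose proof (Rabs_pos g2). pose proof (Rabs_pos m).
      assert (Rabs m * Rabs q * Rabs g2 <= Rabs m * Rabs g2).
      { rewrite Rmult_assoc. apply Rmult_le_compat_l; auto. nra. }
      nra. }
    assert (Hbb : 2 * INR n * 2^n <= (2 * INR n * 2^n)^(k+j)).
    { rewrite <- (pow_1 (2 * INR n * 2^n)) at 1. apply Rle_pow; [nra|unfold j; lia]. }
    replace ((2 * INR n * 2 ^ n * 128) ^ (k + j)) with ((2 * INR n * 2^n)^(k+j) * 128^(k+j))
      by (rewrite <- Rpow_mult_distr; reflexivity).
    assert (0 <= 128^(k+j)) by (apply pow_le; lra).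
    assert (2 * K <= (2 * INR n * 2^n)^(k+j) * 128^(k+j)) by (unfold K; nra).
    nra.
Qed.
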